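(* Let $\mathbf{x}$ be a feasible solution of $\textsc{Dir-MC-Rel}$. For each edge $e=(u,v)\in E$, let $a_1(u)\le a_2(u)$ be the two smallest values in the multiset $\{d_G(s_1,u),\dots,d_G(s_k,u)\}$, and define $I_1(e)=[a_1(u),a_1(u)+x_e)$ and $I_2(e)=[a_2(u),a_2(u)+x_e)$. For $\theta\in(0,1)$ let $C'(\theta)=\{e\in E:\theta\in I_1(e)\cup I_2(e)\}$. Then for every $\theta\in(0,1)$, $C'(\theta)\supseteq C(\theta)$ and $C'(\theta)$ is a directed multiway cut; and if $\theta$ is uniform on $(0,1)$ then $\Pr[e\in C'(\theta)]\le 2x_e$ for every $e\in E$, so $\mathbb{E}[w(C'(\theta))]\le 2\sum_e w_ex_e$.
   Context: $G=(V,E)$ is a directed graph with non-negative edge weights $w_e$ and distinct terminals $s_1,\dots,s_k$, $k\ge2$. A directed multiway cut is $E'\subseteq E$ such that $G-E'$ has no directed path from $s_i$ to $s_j$ for $i\neq j$; $w(E')=\sum_{e\in E'}w_e$. For $i\neq j$, $\mathcal{P}_{ij}$ is the set of directed paths from $s_i$ to $s_j$ in $G$. $\textsc{Dir-MC-Rel}$: minimize $\sum_e w_e x_e$ s.t. $\sum_{e\in p}x_e\ge1$ for all $p\in\mathcal{P}_{ij}$, $i\ne j$, and $x\ge0$. $d_G(a,b)$ is the shortest directed path length from $a$ to $b$ in $G$ with edge lengths $\mathbf{x}$ ($+\infty$ if none). Form $G^+$ by adding new vertices $t_1,\dots,t_k$ and edges $(t_i,s_j)$ for all $i\neq j$ with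 $x$-value $0$; $d$ denotes shortest-path distance in $G^+$ w.r.t. $\mathbf{x}$; $B(v,r)=\{u:d(v,u)\le r\}$; $\delta^+(A)$ is the set of edges of $G^+$ with tail in $A$ and head outside $A$; $C(\theta)=\bigcup_{i=1}^k\delta^+(B(t_i,\theta))$. *)

(* Defs.v *)
From HB Require Import structures.
From mathcomp Require Import all_boot.
From Stdlib Require Import Reals ClassicalEpsilon.

Set Implicit Arguments.
Unset Strict Implicit.
Unset Printing Implicit Defensive.

Record digraph := Digraph {
  vert : finType;
  edge : finType;
  tl : edge -> vert;
  hd : edge -> vert }.

Local Open Scope R_scope.

(* Extended non-negative reals: None = +infinity. *)
Definition ole (a b : option R) : Prop :=
  match a, b with
  | Some a, Some b => a <= b
  | _, None => True
  | None, Some _ => False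
  end.

Definition dle (a : option R) (r : R) : Prop :=
  match a with Some a => a <= r | None => False end.

Section Graph.
Variable G : digraph.

Fixpoint walk (a b : vert G) (p : seq (edge G)) : Prop :=
  match p with
  | [::] => a = b
  | e :: p' => tl e = a /\ walk (hd e) b p'
  end.

Definition dpath (a b : vert G) (p : seq (edge G)) : Prop :=
  walk a b p /\ uniq (a :: map (@hd G) p).

Definition plen (x : edge G -> R) (p : seq (edge G)) : R :=
  foldr (fun e r => x e + r) 0 p.

Definition is_inf (S : R -> Prop) (m : R) : Prop :=
  (forall y, S y -> m <= y) /\ (forall m', (forall y, S y -> m' <= y) -> m' <= m).

Definition spdist (x : edge G -> R) (a b : vert G) : option R :=
  epsilon (inhabits None) (fun o =>
    match o with
    | None => ~ (exists p, dpath a b p)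
    | Some m => (exists p, dpath a b p) /\
                is_inf (fun y => exists p, dpath a b p /\ y = plen x p) m
    end).

Definition out_cut (A : vert G -> Prop) (f : edge G) : Prop :=
  A (tl f) /\ ~ A (hd f).

End Graph.

Definition feasible (G : digraph) (k : nat) (s : 'I_k -> vert G)
  (x : edge G -> R) : Prop :=
  (forall e, 0 <= x e) /\
  (forall i j : 'I_k, i <> j -> forall p, dpath (s i) (s j) p -> 1 <= plen x p).

Definition is_dir_multiway_cut (G : digraph) (k : nat) (s : 'I_k -> vert G)
  (F : edge G -> Prop) : Prop :=
  forall i j : 'I_k, i <> j -> forall p, dpath (s i) (s j) p ->
    exists e, e \in p /\ F e.

(* G^+ : new vertices t_1..t_k and edges (t_i, s_j), i <> j *)
Definition plus_edge (k : nat) := {p : 'I_k * 'I_k | p.1 != p.2}.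

Definition Gplus (G : digraph) (k : nat) (s : 'I_k -> vert G) : digraph :=
  {| vert := (vert G + 'I_k)%type;
     edge := (edge G + plus_edge k)%type;
     tl := fun f => match f with
                    | inl e => inl (tl e)
                    | inr p => inr (sval p).1 end;
     hd := fun f => match f with
                    | inl e => inl (hd e)
                    | inr p => inl (s (sval p).2) end |}.

Definition xplus (G : digraph) (k : nat) (s : 'I_k -> vert G) (x : edge G -> R)
  : edge (Gplus s) -> R :=
  fun f => match f with inl e => x e | inr _ => 0 end.
Arguments xplus {G k} s x.

Definition ballT (G : digraph) (k : nat) (s : 'I_k -> vert G) (x : edge G -> R)
  (i : 'I_k) (r : R) : vert (Gplus s) -> Prop :=
  fun u => dle (spdist (xplus s x) (inr i : vert (Gplus s)) u) r.
Arguments ballT {G k} s x i r _.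

Definition Ccut (G : digraph) (k : nat) (s : 'I_k -> vert G) (x : edge G -> R)
  (theta : R) : edge (Gplus s) -> Prop :=
  fun f => exists i : 'I_k, out_cut (ballT s x i theta) f.
Arguments Ccut {G k} s x theta _.

(* a1 <= a2 are the two smallest values of the multiset {f i | i < k}:
   a1 = f i1 with i1 a minimizer, a2 = f i2 with i2 <> i1 minimizing over
   the remaining indices. *)
Definition two_smallest (k : nat) (f : 'I_k -> option R) (a1 a2 : option R) : Prop :=
  exists i1 : 'I_k, (forall j, ole (f i1) (f j)) /\ a1 = f i1 /\
  exists i2 : 'I_k, i2 <> i1 /\ (forall j, j <> i1 -> ole (f i2) (f j)) /\ a2 = f i2.

Definition in_int (a : option R) (xe theta : R) : Prop :=
  match a with Some a => a <= theta < a + xe | None => False end.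

Definition Cprime (G : digraph) (x : edge G -> R) (a1 a2 : vert G -> option R)
  (theta : R) (e : edge G) : Prop :=
  in_int (a1 (tl e)) (x e) theta \/ in_int (a2 (tl e)) (x e) theta.

Definition indic (P : Prop) : R :=
  if excluded_middle_informative P then 1 else 0.

Definition sumE (G : digraph) (F : edge G -> R) : R :=
  \big[Rplus/0]_(e : edge G) F e.

(* Main.v *)
Require Import Defs.
From HB Require Import structures.
From mathcomp Require Import all_boot.
From Stdlib Require Import Reals ClassicalEpsilon Lra Classical.
From Coquelicot Require Import Coquelicot.
Local Open Scope R_scope.

Set Implicit Arguments.
Unset Strict Implicit.


Lemma walk_cat (G : digraph) (a b c : vert G) p q :
  walk a b p -> walk b c q -> walk a c (p ++ q).
Proof.
elim: p a => [|e p IH] a /=; first by move=> ->.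
by case=> <- Hw Hq; split => //; apply: IH.
Qed.

Lemma plen_cat (G : digraph) (x : edge G -> R) p q :
  plen x (p ++ q) = plen x p + plen x q.
Proof. elim: p => [|e p IH] /=; [lra | rewrite IH; lra]. Qed.

Lemma plen_ge0 (G : digraph) (x : edge G -> R) p :
  (forall e, 0 <= x e) -> 0 <= plen x p.
Proof. move=> Hx; elim: p => [|e p IH] /=; [lra | have := Hx e; lra]. Qed.

Lemma walk_prefix (G : digraph) (p : seq (edge G)) (a b v : vert G) :
  walk a b p -> v \in a :: map (@hd G) p -> exists q r, walk a v q /\ p = q ++ r.
Proof.
elim: p a => [|e p IH] a /=.
  move=> -> ; rewrite inE => /eqP ->; by exists [::], [::].
case=> Ht Hw; rewrite inE; case/orP.
  move/eqP ->; by exists [::], (e :: p).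
move=> /(IH _ Hw) [q [r [Hq ->]]]; exists (e :: q), r; by split.
Qed.

Lemma dpath_extend (G : digraph) (x : edge G -> R) (a u : vert G) q e :
  (forall e, 0 <= x e) -> dpath a u q -> tl e = u ->
  exists q', dpath a (hd e) q' /\ plen x q' <= plen x q + x e.
Proof.
move=> Hx [Hw Hu] Hte.
case Hin: (hd e \in a :: map (@hd G) q).
  have [q' [r [Hq' Eq]]] := walk_prefix Hw Hin.
  exists q'; split.
    split => //; move: Hu; rewrite Eq map_cat -cat_cons cat_uniq.
    by case/andP.
  rewrite Eq plen_cat; have := plen_ge0 r Hx; have := Hx e; lra.
exists (q ++ [:: e]); split.
  split; first by apply: (walk_cat Hw) => /=.
  rewrite map_cat -cat_cons cats1 rcons_uniq Hin Hu //.
rewrite plen_cat /=; lra.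
Qed.

Lemma inf_exists (S : R -> Prop) : (exists y, S y) -> (forall y, S y -> 0 <= y) ->
  exists m, is_inf S m.
Proof.
move=> [y0 Hy0] Hlb.
have Hb : bound (fun z => S (- z)).
  exists 0 => z Hz; have := Hlb _ Hz; lra.
have He : exists z, S (- z) by exists (- y0); rewrite Ropp_involutive.
have [l [Hl1 Hl2]] := completeness _ Hb He.
exists (- l); split.
  move=> y Hy; have : S (- - y) by rewrite Ropp_involutive.
  move=> /Hl1; lra.
move=> m' Hm'; have : (l <= - m'); last lra.
apply: Hl2 => z Hz; have := Hm' _ Hz; lra.
Qed.

Definition PS (G : digraph) (x : edge G -> R) (a b : vert G) :=
  fun y => exists p, dpath a b p /\ y = plen x p.

Lemma spdist_spec (G : digraph) (x : edge G -> R) (a b : vert G) :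
  (forall e, 0 <= x e) ->
  (~ (exists p, dpath a b p) /\ spdist x a b = None) \/
  ((exists p, dpath a b p) /\ exists m, spdist x a b = Some m /\ is_inf (PS x a b) m).
Proof.
move=> Hx.
pose P := fun o : option R => match o with
    | None => ~ (exists p, dpath a b p)
    | Some m => (exists p, dpath a b p) /\
                is_inf (fun y => exists p, dpath a b p /\ y = plen x p) m
    end.
have Hex : exists o, P o.
  case: (classic (exists p, dpath a b p)) => H.
    have [m Hm] : exists m, is_inf (PS x a b) m.
      apply: inf_exists.
        by case: H => p Hp; exists (plen x p), p.
      by move=> y [p [_ ->]]; apply: plen_ge0.
    by exists (Some m).
  by exists None.
have := epsilon_spec (inhabits None) P Hex.
rewrite /spdist -/P; case: (epsilon _ P) => [m|] /=.
  move=> [H1 H2]; right; split => //; by exists m.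
by move=> H; left.
Qed.

Lemma spdist_Some (G : digraph) (x : edge G -> R) (a b : vert G) m :
  (forall e, 0 <= x e) -> spdist x a b = Some m ->
  (exists p, dpath a b p) /\ is_inf (PS x a b) m.
Proof.
move=> Hx E; case: (spdist_spec a b Hx) => [[_ E']|[H [m' [E' H']]]].
  by rewrite E in E'.
by rewrite E in E'; case: E' => ->.
Qed.

Lemma spdist_ex (G : digraph) (x : edge G -> R) (a b : vert G) :
  (forall e, 0 <= x e) -> (exists p, dpath a b p) ->
  exists m, spdist x a b = Some m /\ is_inf (PS x a b) m.
Proof.
move=> Hx H; case: (spdist_spec a b Hx) => [[H' _]|[_ H']] //.
Qed.

Lemma inf_approx S m eps : is_inf S m -> 0 < eps -> exists y, S y /\ y < m + eps.
Proof.
move=> [H1 H2] He; apply: NNPP => Hn.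
have : m + eps <= m; last lra.
apply: H2 => y Hy; apply: Rnot_lt_le => Hlt; apply: Hn; by exists y.
Qed.

Lemma spdist_tri (G : digraph) (x : edge G -> R) (a : vert G) e d :
  (forall e, 0 <= x e) -> spdist x a (tl e) = Some d ->
  exists d', spdist x a (hd e) = Some d' /\ d' <= d + x e.
Proof.
move=> Hx E; have [[p Hp] Hinf] := spdist_Some Hx E.
have [q' [Hq' _]] := dpath_extend Hx Hp (erefl _).
have [d' [E' [Hi1 Hi2]]] := spdist_ex Hx (ex_intro _ q' Hq').
exists d'; split => //.
apply: Rle_plus_epsilon => eps He.
have [y [[q [Hq ->]] Hlt]] := inf_approx Hinf He.
have [r [Hr Hle]] := dpath_extend Hx Hq (erefl _).
have := Hi1 (plen x r) (ex_intro _ r (conj Hr erefl)); lra.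
Qed.


Lemma walk_map_inl (G : digraph) k (s : 'I_k -> vert G) (a b : vert G) q :
  walk a b q -> @walk (Gplus s) (inl a) (inl b) (map inl q).
Proof.
elim: q a => [|e q IH] a /=; first by move=> ->.
by case=> <- H; split => //; apply: IH.
Qed.

Lemma walk_inl_proj (G : digraph) k (s : 'I_k -> vert G) P (a b : vert G) :
  @walk (Gplus s) (inl a) (inl b) P -> exists q, P = map inl q /\ walk a b q.
Proof.
elim: P a => [|f P IH] a /=.
  by case=> ->; exists [::].
case: f => [e|pe] /=; last by case.
case=> [[<-]] /IH [q [-> Hq]]; by exists (e :: q).
Qed.

Lemma walk_inr_end (G : digraph) k (s : 'I_k -> vert G) P a j :
  @walk (Gplus s) a (inr j) P -> a = inr j.
Proof.
elim: P a => [|f P IH] a /=; first by [].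
case=> _ /IH; by case: f.
Qed.

Lemma plen_map_inl (G : digraph) k (s : 'I_k -> vert G) x q :
  plen (xplus s x) (map inl q) = plen x q.
Proof. elim: q => [|e q IH] //=; by rewrite IH. Qed.

Lemma uniq_map_inl (G : digraph) k (s : 'I_k -> vert G) (a : vert G) q :
  uniq (a :: map (@hd G) q) ->
  uniq ((inl a : vert (Gplus s)) :: map (@hd (Gplus s)) (map inl q)).
Proof.
move=> H; rewrite -map_comp.
have -> : (inl a : vert (Gplus s)) :: [seq (@hd (Gplus s) \o inl) i | i <- q]
   = map inl (a :: map (@hd G) q) by rewrite /= -map_comp.
rewrite map_inj_uniq //; by move=> ? ? [].
Qed.

Lemma map_hd_inl (G : digraph) k (s : 'I_k -> vert G) (q : seq (edge G)) :
  [seq (fun f : edge (Gplus s) => match f return vert (Gplus s) with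
                 | inl e => inl (hd e)
                 | inr p => inl (s (sval p).2)
                 end) f | f <- map (@inl (edge G) (plus_edge k)) q] =
  map inl (map (@hd G) q).
Proof. by elim: q => //= e q ->. Qed.

Definition mkpe k (i c : 'I_k) (H : i != c) : plus_edge k :=
  exist (fun p : 'I_k * 'I_k => p.1 != p.2) (i, c) H.

Lemma dpath_lift (G : digraph) k (s : 'I_k -> vert G) x (i c : 'I_k) (H : i != c)
  (w : vert G) q :
  dpath (s c) w q ->
  @dpath (Gplus s) (inr i) (inl w) (inr (mkpe H) :: map inl q) /\
  plen (xplus s x) (inr (mkpe H) :: map inl q) = plen x q.
Proof.
move=> [Hw Hu]; split; last by rewrite /= plen_map_inl; lra.
split; first by split => //=; apply: walk_map_inl.
have := uniq_map_inl s Hu.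
rewrite /= => /andP [H1 H2]; rewrite H1 H2 andbT /= inE /=.
rewrite andbT; apply/negP.
by move/mapP => [y /mapP [z _ ->] /=].
Qed.

Lemma dpath_proj (G : digraph) k (s : 'I_k -> vert G) x (i : 'I_k) (u : vert G) P :
  @dpath (Gplus s) (inr i) (inl u) P ->
  exists l, l <> i /\ exists q, dpath (s l) u q /\ plen (xplus s x) P = plen x q.
Proof.
case: P => [|f P] [Hw Hu] /=; first by case: Hw.
case: f Hw Hu => [e|[[i' l] Hil]] /= [Ht Hw]; first by case: Ht.
case: Ht => Ei; subst i'.
move=> Hu; exists l; split; first by move=> E; subst l; rewrite eqxx in Hil.
have [q [Eq Hq]] := walk_inl_proj Hw; subst P.
exists q; split; last by rewrite plen_map_inl; lra.
split => //.
move: Hu => /andP [_] /=.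
have Hinj : injective (@inl (vert G) 'I_k) by move=> ? ? [].
rewrite map_hd_inl (mem_map Hinj) (map_inj_uniq Hinj) /=; by [].
Qed.

Lemma xplus_ge0 (G : digraph) k (s : 'I_k -> vert G) x :
  (forall e, 0 <= x e) -> forall f, 0 <= xplus s x f.
Proof. by move=> Hx [e|pe] /=; [apply: Hx | lra]. Qed.

Lemma plus_lb (G : digraph) k (s : 'I_k -> vert G) x (i : 'I_k) (u : vert G) D m :
  (forall e, 0 <= x e) ->
  (forall l, l <> i -> ole D (spdist x (s l) u)) ->
  spdist (xplus s x) (inr i) (inl u) = Some m ->
  exists d, D = Some d /\ d <= m.
Proof.
move=> Hx HD E.
have [[P0 HP0] [Hi1 Hi2]] := spdist_Some (xplus_ge0 Hx) E.
have [l0 [Hl0 [q0 [Hq0 _]]]] := dpath_proj x HP0.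
have [m0 [E0 _]] := spdist_ex Hx (ex_intro _ q0 Hq0).
have := HD _ Hl0; rewrite E0; case: D HD => [d|] //= HD _.
exists d; split => //; apply: Hi2 => y [P [HP ->]].
have [l [Hl [q [Hq ->]]]] := dpath_proj x HP.
have [ml [El [Hm1 _]]] := spdist_ex Hx (ex_intro _ q Hq).
have := HD _ Hl; rewrite El /= => Hd.
have := Hm1 (plen x q) (ex_intro _ q (conj Hq erefl)); lra.
Qed.

Lemma plus_ub (G : digraph) k (s : 'I_k -> vert G) x (i c : 'I_k) (w : vert G) d :
  (forall e, 0 <= x e) -> c <> i ->
  spdist x (s c) w = Some d ->
  exists m, spdist (xplus s x) (inr i) (inl w) = Some m /\ m <= d.
Proof.
move=> Hx Hci E.
have Hic : i != c by apply/eqP => E'; apply: Hci; rewrite E'.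
have [[q0 Hq0] [Hd1 Hd2]] := spdist_Some Hx E.
have [HP0 _] := dpath_lift x Hic Hq0.
have [m [Em [Hm1 Hm2]]] := spdist_ex (xplus_ge0 Hx) (ex_intro _ _ HP0).
exists m; split => //; apply: Hd2 => y [q [Hq ->]].
have [HP HL] := dpath_lift x Hic Hq.
rewrite -HL; apply: Hm1; by exists (inr (mkpe Hic) :: map inl q).
Qed.


Lemma ole_Some D v : ole D (Some v) -> exists d, D = Some d /\ d <= v.
Proof. by case: D => [d|] //= H; exists d. Qed.

Lemma choose_D k (f : 'I_k -> option R) A1 A2 (j : 'I_k) :
  two_smallest f A1 A2 ->
  exists c, c <> j /\ (A1 = f c \/ A2 = f c) /\ forall l, l <> j -> ole (f c) (f l).
Proof.
move=> [i1 [H1 [E1 [i2 [Hne [H2 E2]]]]]].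
case: (eqVneq j i1) => [Ej|Nj].
  subst j; exists i2; split => //; split; first by right.
  by [].
exists i1; split; first by move=> E; rewrite E eqxx in Nj.
split; first by left.
by move=> l _.
Qed.

Lemma claim1 (G : digraph) (k : nat) (s : 'I_k -> vert G)
  (x : edge G -> R) (a1 a2 : vert G -> option R) theta f :
  (forall e, 0 <= x e) -> 0 < theta ->
  (forall u, two_smallest (fun i => spdist x (s i) u) (a1 u) (a2 u)) ->
  Ccut s x theta f -> exists e, f = inl e /\ Cprime x a1 a2 theta e.
Proof.
move=> Hx Ht Hts [i [Hin Hout]].
case: f Hin Hout => [e|pe] Hin Hout; last first.
  exfalso; move: Hin Hout; rewrite /ballT /=.
  case: pe => [[p1 p2] Hp] /= Hin Hout.
  case E1: (spdist _ _ _) Hin => [m1|] //= _.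
  have [[P HP] _] := spdist_Some (xplus_ge0 Hx) E1.
  have Ei : inr i = inr p1 :> vert (Gplus s).
    by case: HP => HW _; apply: (walk_inr_end HW).
  case: Ei => Ei; subst p1.
  pose pe := mkpe (Hp : i != p2).
  have Hd : @dpath (Gplus s) (inr i) (inl (s p2)) [:: inr pe].
    split => //=; rewrite inE /= andbT //.
  have [m [E2 [Hm1 _]]] := spdist_ex (xplus_ge0 Hx) (ex_intro _ _ Hd).
  apply: Hout; rewrite E2 /=.
  have := Hm1 _ (ex_intro _ _ (conj Hd (erefl _))); simpl; lra.
exists e; split => //.
move: Hin Hout; rewrite /ballT /=.
have [c [Hci [Ha HD]]] := choose_D i (Hts (tl e)).
case E1: (spdist _ _ _) => [m|] //= Hm Hout.
have [d [ED Hdm]] := plus_lb Hx HD E1.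
have [d' [E' Hd']] := spdist_tri Hx ED.
have [m' [Em' Hm']] := plus_ub Hx Hci E'.
rewrite Em' /= in Hout.
have Hint : Defs.in_int (spdist x (s c) (tl e)) (x e) theta.
  rewrite ED /=; lra.
by rewrite /Cprime; case: Ha => ->; [left|right].
Qed.

Lemma spdist_self (G : digraph) (x : edge G -> R) (a : vert G) :
  (forall e, 0 <= x e) -> exists m, spdist x a a = Some m /\ m <= 0.
Proof.
move=> Hx.
have Hd : dpath a a [::] by split => //=.
have [m [E [H1 _]]] := spdist_ex Hx (ex_intro _ _ Hd).
exists m; split => //; apply: (H1 0); by exists [::].
Qed.

Lemma claim2 (G : digraph) (k : nat) (s : 'I_k -> vert G)
  (x : edge G -> R) (a1 a2 : vert G -> option R) theta :
  feasible s x -> 0 < theta < 1 ->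
  (forall u, two_smallest (fun i => spdist x (s i) u) (a1 u) (a2 u)) ->
  is_dir_multiway_cut s (Cprime x a1 a2 theta).
Proof.
move=> [Hx Hfeas] Ht Hts i j Hij p [Hw _].
pose Pr (a : vert G) (D : option R) :=
  (a1 a = D \/ a2 a = D) /\ (forall l, l <> j -> ole D (spdist x (s l) a)) /\
  exists c, c <> j /\ D = spdist x (s c) a.
have HPr : forall a, exists D, Pr a D.
  move=> a; have [c [Hc [Ha HD]]] := choose_D j (Hts a).
  exists (spdist x (s c) a); split => //; split => //; by exists c.
have Hend : forall D, Pr (s j) D -> ~ dle D theta.
  move=> D [_ [_ [c [Hc ->]]]].
  case E: (spdist _ _ _) => [m|] //=.
  have [_ [_ H2]] := spdist_Some Hx E.
  have : 1 <= m; last lra.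
  apply: H2 => y [q [Hq ->]]; apply: (Hfeas c j Hc q Hq).
have Hstart : exists D, Pr (s i) D /\ dle D theta.
  have [D HD] := HPr (s i); exists D; split => //.
  have [m [Em Hm]] := spdist_self (s i) Hx.
  case: HD => [_ [HD _]]; have := HD i Hij; rewrite Em => /ole_Some [d [-> Hd]] /=.
  lra.
elim: p (s i) Hw Hstart => [|e p IH] a /=.
  move=> -> [D [HD HDt]]; by case: (Hend D HD).
move=> [Hte Hw] [D [HD HDt]].
case: HD => [Ha [HDl [c [Hc ED]]]].
case ED' : D HDt ED => [d|] //= Hdt ED.
case: (Rlt_le_dec theta (d + x e)) => Hlt.
  exists e; split; first by rewrite inE eqxx.
  have Hint : Defs.in_int D (x e) theta by rewrite ED' /=; lra.
  by rewrite /Cprime Hte; case: Ha => ->; [left|right].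
rewrite -Hte in ED.
have [d'' [E'' Hd'']] := spdist_tri Hx (esym ED).
have [D' HD'] := HPr (hd e).
have [e' [He' HC]] : exists e', e' \in p /\ Cprime x a1 a2 theta e'.
  apply: (IH (hd e) Hw); exists D'; split => //.
  case: HD' => [_ [HD' _]]; have := HD' c Hc; rewrite E'' => /ole_Some [d3 [-> Hd3]] /=.
  lra.
exists e'; by rewrite inE He' orbT.
Qed.

Unset Implicit Arguments.
Set Strict Implicit.


Lemma RplusE (a b : R) : plus a b = a + b. Proof. by []. Qed.
Lemma RscalE (a b : R) : scal a b = a * b. Proof. by []. Qed.
Lemma RminusE (a b : R) : minus a b = a - b. Proof. by []. Qed.

Definition clamp c := Rmax 0 (Rmin c 1).

Lemma clamp_bounds c : 0 <= clamp c <= 1.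
Proof. rewrite /clamp /Rmax /Rmin; do 2 case: Rle_dec; lra. Qed.

Lemma indicT (P : Prop) : P -> indic P = 1.
Proof. by rewrite /indic; case: excluded_middle_informative. Qed.
Lemma indicF (P : Prop) : ~ P -> indic P = 0.
Proof. by rewrite /indic; case: excluded_middle_informative. Qed.

Lemma H_int c : is_RInt (fun t => indic (c <= t)) 0 1 (1 - clamp c).
Proof.
have [Hm0 Hm1] := clamp_bounds c.
have -> : 1 - clamp c = plus (scal (clamp c - 0) 0) (scal (1 - clamp c) 1).
  rewrite RplusE !RscalE; lra.
apply: (is_RInt_Chasles _ _ (clamp c)).
  apply: is_RInt_ext; last exact: is_RInt_const.
  move=> t; rewrite Rmin_left // Rmax_right // => Ht.
  rewrite indicF //; move: Ht; rewrite /clamp /Rmax /Rmin; do 2 case: Rle_dec; lra.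
apply: is_RInt_ext; last exact: is_RInt_const.
move=> t; rewrite Rmin_left // Rmax_right // => Ht.
rewrite indicT //; move: Ht; rewrite /clamp /Rmax /Rmin; do 2 case: Rle_dec; lra.
Qed.

Lemma I_int a b : a <= b ->
  is_RInt (fun t => indic (a <= t < b)) 0 1 (clamp b - clamp a).
Proof.
move=> Hab.
have -> : clamp b - clamp a = minus (1 - clamp a) (1 - clamp b) by rewrite RminusE; lra.
have HI := is_RInt_minus _ _ _ _ _ _ (H_int a) (H_int b).
eapply is_RInt_ext; last exact HI.
move=> t _; cbv beta; rewrite RminusE.
case: (Rle_dec a t) => Ha; case: (Rlt_le_dec t b) => Hb.
- rewrite (indicT (a <= t)) // (indicF (b <= t)) ?(indicT (a <= t < b)); lra.
- rewrite (indicT (a <= t)) // (indicT (b <= t)) ?(indicF (a <= t < b)); lra.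
- rewrite (indicF (a <= t)) // (indicF (b <= t)) ?(indicF (a <= t < b)); lra.
- lra.
Qed.

Lemma clamp_le a b : a <= b -> clamp b - clamp a <= b - a /\ 0 <= clamp b - clamp a.
Proof. rewrite /clamp /Rmax /Rmin => H; do 4 case: Rle_dec; lra. Qed.

Lemma int_rep (a : option R) xe : 0 <= xe ->
  exists al be, al <= be <= al + xe /\ forall t, Defs.in_int a xe t <-> al <= t < be.
Proof.
case: a => [a|] Hx /=.
  exists a, (a + xe); split; [lra | by []].
exists 0, 0; split; [lra | move=> t; split => //; lra].
Qed.

Lemma union_int (P1 P2 : R -> Prop) xe : 0 <= xe ->
  (exists al be, al <= be <= al + xe /\ forall t, P1 t <-> al <= t < be) ->
  (exists al be, al <= be <= al + xe /\ forall t, P2 t <-> al <= t < be) ->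
  exists V, is_RInt (fun t => indic (P1 t \/ P2 t)) 0 1 V /\ V <= 2 * xe.
Proof.
move=> Hx [a1 [b1 [H1 E1]]] [a2 [b2 [H2 E2]]].
pose a3 := Rmax a1 a2; pose b3' := Rmin b1 b2.
pose b3 := if Rle_dec a3 b3' then b3' else a3.
have H3 : a3 <= b3.
  rewrite /b3; case: Rle_dec => h /=; lra.
have E3 : forall t, (P1 t /\ P2 t) <-> a3 <= t < b3.
  move=> t; rewrite E1 E2 /b3 /a3 /b3' /Rmax /Rmin.
  do 3 (case: Rle_dec => ? /=); split => H; repeat split; lra.
exists ((clamp b1 - clamp a1) + (clamp b2 - clamp a2) - (clamp b3 - clamp a3)).
split.
  have HI := is_RInt_minus _ _ _ _ _ _ (is_RInt_plus _ _ _ _ _ _ (I_int _ _ H1.1) (I_int _ _ H2.1)) (I_int _ _ H3).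
  apply: is_RInt_ext; last exact: HI.
  move=> t _; cbv beta; rewrite RminusE RplusE.
  have := E1 t; have := E2 t; have := E3 t.
  case: (classic (P1 t)) => h1; case: (classic (P2 t)) => h2 => e3 e2 e1.
  - rewrite (indicT (_ \/ _)); last by left.
    rewrite indicT; last by apply/e1.
    rewrite (indicT (a2 <= t < b2)); last by apply/e2.
    rewrite indicT; [lra | by apply/e3].
  - rewrite (indicT (_ \/ _)); last by left.
    rewrite indicT; last by apply/e1.
    rewrite (indicF (a2 <= t < b2)); last by move/e2.
    rewrite indicF; [lra | by move/e3 => []].
  - rewrite (indicT (_ \/ _)); last by right.
    rewrite indicF; last by move/e1.
    rewrite (indicT (a2 <= t < b2)); last by apply/e2.
    rewrite indicF; [lra | by move/e3 => []].
  - rewrite (indicF (_ \/ _)); last by case.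
    rewrite indicF; last by move/e1.
    rewrite (indicF (a2 <= t < b2)); last by move/e2.
    rewrite indicF; [lra | by move/e3 => []].
have := clamp_le _ _ H1.1; have := clamp_le _ _ H2.1; have := clamp_le _ _ H3; lra.
Qed.


Lemma edge_int (G : digraph) (x : edge G -> R) (a1 a2 : vert G -> option R) e :
  0 <= x e ->
  exists V, is_RInt (fun t => indic (Cprime x a1 a2 t e)) 0 1 V /\ V <= 2 * x e.
Proof.
move=> Hx.
have := union_int (fun t => Defs.in_int (a1 (tl e)) (x e) t)
                  (fun t => Defs.in_int (a2 (tl e)) (x e) t) (x e) Hx
                  (int_rep _ _ Hx) (int_rep _ _ Hx).
by [].
Qed.

Lemma sum_int (G : digraph) (w : edge G -> R) (C : R -> edge G -> Prop) (V : edge G -> R)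
  (H : forall e, is_RInt (fun t => indic (C t e)) 0 1 (V e)) (r : seq (edge G)) :
  is_RInt (fun t => \big[Rplus/0]_(e <- r) (w e * indic (C t e))) 0 1
          (\big[Rplus/0]_(e <- r) (w e * V e)).
Proof.
elim: r => [|e r IH].
  rewrite big_nil.
  have HC := is_RInt_const 0 1 (0 : R).
  rewrite RscalE Rmult_0_r in HC.
  eapply is_RInt_ext; last exact HC.
  by move=> t _; rewrite big_nil.
rewrite big_cons.
have HI := is_RInt_plus _ _ _ _ _ _ (is_RInt_scal _ _ _ (w e) _ (H e)) IH.
eapply is_RInt_ext; last exact HI.
by move=> t _; cbv beta; rewrite big_cons RplusE RscalE.
Qed.

Lemma sum_le (G : digraph) (F1 F2 : edge G -> R) (r : seq (edge G)) :
  (forall e, F1 e <= F2 e) ->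
  \big[Rplus/0]_(e <- r) F1 e <= \big[Rplus/0]_(e <- r) F2 e.
Proof.
move=> H; elim: r => [|e r IH]; first by rewrite !big_nil; lra.
rewrite !big_cons; have := H e; lra.
Qed.

Lemma sum_scal (G : digraph) (F : edge G -> R) (c : R) (r : seq (edge G)) :
  \big[Rplus/0]_(e <- r) (c * F e) = c * \big[Rplus/0]_(e <- r) F e.
Proof.
elim: r => [|e r IH]; first by rewrite !big_nil; lra.
rewrite !big_cons IH; lra.
Qed.

Theorem mainTheorem5 (G : digraph) (k : nat) (s : 'I_k -> vert G)
  (w x : edge G -> R) (a1 a2 : vert G -> option R) :
  (2 <= k)%nat ->
  injective s ->
  (forall e, 0 <= w e) ->
  feasible s x ->
  (forall u, two_smallest (fun i => spdist x (s i) u) (a1 u) (a2 u)) ->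
  (forall theta, 0 < theta < 1 ->
     (forall f, Ccut s x theta f -> exists e, f = inl e /\ Cprime x a1 a2 theta e) /\
     is_dir_multiway_cut s (Cprime x a1 a2 theta)) /\
  (forall e, exists pr : Riemann_integrable (fun theta => indic (Cprime x a1 a2 theta e)) 0 1,
     RiemannInt pr <= 2 * x e) /\
  (exists pr : Riemann_integrable
                 (fun theta => sumE (fun e => w e * indic (Cprime x a1 a2 theta e))) 0 1,
     RiemannInt pr <= 2 * sumE (fun e => w e * x e)).
Proof.
move=> _ _ Hw Hfeas Hts.
have Hx := Hfeas.1.
split.
  move=> theta Ht; split.
    move=> f Hf; exact: (claim1 Hx (proj1 Ht) Hts Hf).
  exact: (claim2 Hfeas Ht Hts).
have Hedge : forall e, is_RInt (fun t => indic (Cprime x a1 a2 t e)) 0 1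
      (RInt (fun t => indic (Cprime x a1 a2 t e)) 0 1) /\
      RInt (fun t => indic (Cprime x a1 a2 t e)) 0 1 <= 2 * x e.
  move=> e; have [V [HV HVle]] := edge_int G x a1 a2 e (Hx e).
  by rewrite (is_RInt_unique _ _ _ _ HV).
split.
  move=> e; have [HV HVle] := Hedge e.
  have Hex : ex_RInt (fun t => indic (Cprime x a1 a2 t e)) 0 1 by eexists; exact HV.
  exists (ex_RInt_Reals_0 _ _ _ Hex).
  by rewrite -RInt_Reals.
have HS := sum_int G w (fun t e => Cprime x a1 a2 t e) _ (fun e => (Hedge e).1) (index_enum (edge G)).
have Hex : ex_RInt (fun t => sumE (fun e => w e * indic (Cprime x a1 a2 t e))) 0 1
  by eexists; exact HS.
exists (ex_RInt_Reals_0 _ _ _ Hex).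
rewrite -RInt_Reals (is_RInt_unique _ _ _ _ HS) /sumE -sum_scal.
apply: sum_le => e.
have := (Hedge e).2; have := Hw e; nra.
Qed.
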